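(* Let $A$ and $B$ be $k$-algebras and $\tau\colon B\otimes A\to A\otimes B$ a twisting map, and equip $A$, $B$ and $A\otimes_\tau B$ with their cofinite topologies. Consider the conditions: (i) $\tau\colon B\otimes^! A\to A\otimes^! B$ is continuous; (ii) the identity-on-$A\otimes B$ map $A\otimes^! B\to A\otimes_\tau B$ is a homeomorphism; (iii) there exist neighborhood bases of zero $\{I_\alpha\}\subseteq\mathcal F(A)$ and $\{J_\beta\}\subseteq\mathcal F(B)$ such that $\tau(B\otimes I_\alpha)\subseteq I_\alpha\otimes B$ and $\tau(J_\beta\otimes A)\subseteq A\otimes J_\beta$ for all $\alpha,\beta$. Then (i) and (ii) are equivalent, and (iii) implies (i).
   Context: $k$ is a field (discrete topology); algebras are unital associative. For an algebra $R$, $\mathcal F(R)$ is the set of two-sided ideals of finite codimension, and the cofinite topology on $R$ is the linear topology whose open subspaces are those containing some element of $\mathcal F(R)$ (so $\mathcal F(R)$ is a neighborhood basis of zero, and a subfamily is a neighborhood basis of zero if every element of $\mathcal F(R)$ contains a member of it). For linearly topologized spaces $E,F$, $E\otimes^!F$ is $E\otimes F$ with the linear topology whose open subspaces are those containing $E_0\otimes F+E\otimes F_0$ for some open subspaces $E_0\subseteq E$, $F_0\subseteq F$. A linear map $\tau\colon B\otimes A\to A\otimes B$ is a twisting map if the multiplication $m_\tau=(m_A\otimes m_B)\circ(\mathrm{id}_A\otimes\tau\otimes\mathrm{id}_B)$ on $A\otimes B$ is associative with identity $1_A\otimes1_B$; the resulting algebra is the twisted tensor product $A\otimes_\tau B$.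 *)

(* Defs.v *)
(* Tensor products of (possibly infinite-dimensional)
   k-vector spaces are given abstractly, by the universal property. *)
From mathcomp Require Import all_boot all_order all_algebra.
Set Implicit Arguments. Unset Strict Implicit. Unset Printing Implicit Defensive.
Import GRing.Theory.
Local Open Scope ring_scope.

Section Defs.
Variable k : fieldType.

Definition klinear (U W : lmodType k) (f : U -> W) : Prop :=
  forall (a : k) (u v : U), f (a *: u + v) = a *: f u + f v.

Definition kbilinear (U V W : lmodType k) (f : U -> V -> W) : Prop :=
  (forall u, klinear (f u)) /\ (forall v, klinear (fun u => f u v)).

Definition is_tensor (U V T : lmodType k) (t : U -> V -> T) : Prop :=
  kbilinear t /\
  forall (W : lmodType k) (f : U -> V -> W), kbilinear f ->
    exists g : T -> W, [/\ klinear g, (forall u v, g (t u v) = f u v) &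
      forall g' : T -> W, klinear g' -> (forall u v, g' (t u v) = f u v) ->
        forall x, g' x = g x].

Definition subspace (V : lmodType k) (W : V -> Prop) : Prop :=
  W 0 /\ forall (a : k) (x y : V), W x -> W y -> W (a *: x + y).

Definition kspan (V : lmodType k) (S : V -> Prop) (x : V) : Prop :=
  exists (s : seq V) (c : 'I_(size s) -> k),
    (forall i : 'I_(size s), S s`_i) /\ x = \sum_(i < size s) c i *: s`_i.

Definition fincodim_ideal (V : lmodType k) (mul : V -> V -> V) (I : V -> Prop)
  : Prop :=
  [/\ subspace I,
      (forall x y, I y -> I (mul x y) /\ I (mul y x)) &
      exists s : seq V, forall v, exists c : 'I_(size s) -> k,
        I (v - \sum_(i < size s) c i *: s`_i)].

(* A linear topology is described by its family of open subspaces [os]. *)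
Definition lin_open (V : lmodType k) (os : (V -> Prop) -> Prop) (U : V -> Prop)
  : Prop :=
  forall x, U x -> exists W, os W /\ forall w, W w -> U (x + w).

Definition lin_continuous (V W : lmodType k) (osV : (V -> Prop) -> Prop)
  (osW : (W -> Prop) -> Prop) (f : V -> W) : Prop :=
  forall U, lin_open osW U -> lin_open osV (fun x => U (f x)).

Definition cofinite_os (V : lmodType k) (mul : V -> V -> V) (W : V -> Prop)
  : Prop :=
  subspace W /\ exists I, fincodim_ideal mul I /\ forall x, I x -> W x.

Definition tsum_sub (E F T : lmodType k) (t : E -> F -> T)
  (E0 : E -> Prop) (F0 : F -> Prop) : T -> Prop :=
  kspan (fun x => exists u v, (E0 u \/ F0 v) /\ x = t u v).

Definition tleft_sub (E F T : lmodType k) (t : E -> F -> T) (P : E -> Prop)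
  : T -> Prop := kspan (fun x => exists u v, P u /\ x = t u v).
Definition tright_sub (E F T : lmodType k) (t : E -> F -> T) (Q : F -> Prop)
  : T -> Prop := kspan (fun x => exists u v, Q v /\ x = t u v).

Definition tensor_os (E F T : lmodType k) (t : E -> F -> T)
  (osE : (E -> Prop) -> Prop) (osF : (F -> Prop) -> Prop) (W : T -> Prop)
  : Prop :=
  subspace W /\ exists E0 F0, [/\ osE E0, osF F0 &
      forall x, tsum_sub t E0 F0 x -> W x].

(* [mul] is the multiplication m_tau on A (x) B:
   (a (x) b)(a' (x) b') = (L_a o R_b') (tau (b (x) a')),
   where L_a o R_b' is the linear map x (x) y |-> a x (x) y b'. *)
Definition twisted_mul (A B : algType k) (TAB TBA : lmodType k)
  (tAB : A -> B -> TAB) (tBA : B -> A -> TBA) (tau : TBA -> TAB)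
  (mul : TAB -> TAB -> TAB) : Prop :=
  kbilinear mul /\
  forall (a : A) (b : B) (a' : A) (b' : B),
    exists h : TAB -> TAB, [/\ klinear h,
      (forall x y, h (tAB x y) = tAB (a * x) (y * b')) &
      mul (tAB a b) (tAB a' b') = h (tau (tBA b a'))].

Definition twisting_map (A B : algType k) (TAB TBA : lmodType k)
  (tAB : A -> B -> TAB) (tBA : B -> A -> TBA) (tau : TBA -> TAB)
  (mul : TAB -> TAB -> TAB) : Prop :=
  [/\ klinear tau, twisted_mul tAB tBA tau mul,
      associative mul, left_id (tAB 1 1) mul & right_id (tAB 1 1) mul].

Definition nbhd_basis_F (V : lmodType k) (mul : V -> V -> V)
  (fam : (V -> Prop) -> Prop) : Prop :=
  (forall I, fam I -> fincodim_ideal mul I) /\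
  (forall I, fincodim_ideal mul I -> exists J, fam J /\ forall x, J x -> I x).

End Defs.

(* Main.v *)
Require Import Defs.
From HB Require Import structures.
From mathcomp Require Import all_boot all_order all_algebra ring_quotient.
From mathcomp Require Import boolp.
Set Implicit Arguments. Unset Strict Implicit. Unset Printing Implicit Defensive.
Import GRing.Theory.
Local Open Scope ring_scope.

Local Open Scope quotient_scope.
Import ring_quotient.Quotient.

Section Q.
Variables (k : fieldType) (T : lmodType k) (W : T -> Prop).
Hypothesis hW : subspace W.

Lemma subW0 : W 0. Proof. by case: hW. Qed.
Lemma subWZD a x y : W x -> W y -> W (a *: x + y). Proof. by case: hW => _; apply. Qed.
Lemma subWD x y : W x -> W y -> W (x + y).
Proof. by move=> *; rewrite -[x]scale1r; apply: subWZD. Qed.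
Lemma subWZ a x : W x -> W (a *: x).
Proof. by move=> *; rewrite -[_ *: _]addr0; apply: subWZD => //; apply: subW0. Qed.
Lemma subWN x : W x -> W (- x).
Proof. by move=> *; rewrite -scaleN1r; apply: subWZ. Qed.
Lemma subWB x y : W x -> W y -> W (x - y).
Proof. by move=> *; apply: subWD => //; apply: subWN. Qed.

Definition Wb : {pred T} := fun x => `[< W x >].
Lemma Wb_closed : zmod_closed Wb.
Proof.
split; first by apply/asboolP; apply: subW0.
by move=> u v /asboolP hu /asboolP hv; apply/asboolP; apply: subWB.
Qed.
HB.instance Definition _ := GRing.isZmodClosed.Build T Wb Wb_closed.

Notation Qt := (Quotient.quot Wb).
Definition qscale (a : k) (q : Qt) : Qt := \pi_Qt (a *: repr q).

Lemma pi_scale a x : \pi_Qt (a *: x) = qscale a (\pi_Qt x).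
Proof.
rewrite /qscale; apply/eqP; rewrite piE Quotient.equivE; apply/asboolP.
rewrite -scalerBr; apply: subWZ.
have := eqxx (\pi_Qt x); rewrite -{1}[\pi_Qt x]reprK piE Quotient.equivE.
move/asboolP => h; by rewrite -opprB; apply: subWN.
Qed.

Lemma qscale_pi a x : qscale a (\pi_Qt x) = \pi_Qt (a *: x).
Proof. by rewrite pi_scale. Qed.

Lemma pi_addQ u v : \pi_Qt (u + v) = (\pi_Qt u + \pi_Qt v : Qt).
Proof. exact: Quotient.pi_add. Qed.

Lemma qscalerA a b v : qscale a (qscale b v) = qscale (a * b) v.
Proof. by move: v; apply: quotW => v; rewrite [qscale b _]qscale_pi !qscale_pi scalerA. Qed.
Lemma qscale1r : left_id 1 qscale.
Proof. by apply: quotW => v; rewrite !qscale_pi scale1r. Qed.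
Lemma qscalerDr : right_distributive qscale +%R.
Proof.
move=> a u v; move: u v; apply: quotW => u; apply: quotW => v.
by rewrite -pi_addQ !qscale_pi scalerDr pi_addQ.
Qed.
Lemma qscalerDl v : {morph qscale^~ v: a b / a + b}.
Proof.
move=> a b; move: v; apply: quotW => v.
by rewrite !qscale_pi scalerDl pi_addQ.
Qed.
HB.instance Definition _ := GRing.Zmodule_isLmodule.Build k Qt qscalerA qscale1r qscalerDr qscalerDl.

Lemma pi_lin : klinear (fun x : T => (\pi_Qt x : Qt)).
Proof. move=> a u v /=. by rewrite pi_addQ pi_scale. Qed.

Lemma pi0 : (\pi_Qt 0 : Qt) = 0.
Proof. by apply: (@addrI _ (\pi_Qt 0)); rewrite -pi_addQ !addr0. Qed.

Lemma pi_zero x : W x -> (\pi_Qt x : Qt) = 0.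
Proof.
move=> hx; rewrite -pi0.
apply/eqP; rewrite piE Quotient.equivE subr0; exact/asboolP.
Qed.

Lemma pi_zeroP x : (\pi_Qt x : Qt) = 0 -> W x.
Proof.
rewrite -pi0.
by move/eqP; rewrite piE Quotient.equivE subr0 => /asboolP.
Qed.
Lemma quot_span (U V : lmodType k) (t : U -> V -> T) :
  is_tensor t -> (forall u v, W (t u v)) -> forall z, W z.
Proof.
move=> [_ ht] hg z.
have bil0 : kbilinear (fun (_ : U) (_ : V) => (0 : Qt)).
  by split=> ? a ? ?; rewrite scaler0 addr0.
have [g [_ _ uniq]] := ht Qt _ bil0.
apply: pi_zeroP.
rewrite (uniq (fun x : T => \pi_Qt x) (@pi_lin) _ z); last by move=> u v; apply: pi_zero.
rewrite -(uniq (fun _ => 0)) //.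
by move=> a u v; rewrite scaler0 addr0.
Qed.
End Q.


Section Gen.
Variable k : fieldType.

Lemma zid (Z : zmodType) (a b p r s: Z) : a - b - (p - s) = (a - (r + p)) - (b - (r + s)).
Proof.
rewrite !opprB !opprD !addrA (addrAC (a - r) (- p) r) subrK.
by rewrite (addrAC a (- b)) (addrAC (a + s)) (addrAC a s).
Qed.

Section Lin.
Variables (U W : lmodType k) (f : U -> W).
Hypothesis hf : klinear f.
Lemma lin0 : f 0 = 0.
Proof.
have h := hf 1 0 0; rewrite !scale1r addr0 in h.
by apply: (@addrI _ (f 0)); rewrite -h addr0.
Qed.
Lemma linD u v : f (u + v) = f u + f v.
Proof. by have := hf 1 u v; rewrite !scale1r. Qed.
Lemma linZ a u : f (a *: u) = a *: f u.
Proof. by have := hf a u 0; rewrite !addr0 lin0 addr0. Qed.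
Lemma linN u : f (- u) = - f u.
Proof. by rewrite -scaleN1r linZ scaleN1r. Qed.
Lemma linB u v : f (u - v) = f u - f v.
Proof. by rewrite linD linN. Qed.
End Lin.

Lemma klinear_id (U : lmodType k) : klinear (fun x : U => x).
Proof. by []. Qed.

Lemma subspace_pre (U W : lmodType k) (f : U -> W) (P : W -> Prop) :
  klinear f -> subspace P -> subspace (fun x => P (f x)).
Proof.
move=> hf hP; split; first by rewrite lin0 //; apply: subW0.
by move=> a x y hx hy; rewrite hf; apply: subWZD.
Qed.

Lemma subspaceT (U : lmodType k) : subspace (fun _ : U => True).
Proof. by []. Qed.

Lemma subspaceI (U : lmodType k) (P Q : U -> Prop) :
  subspace P -> subspace Q -> subspace (fun x => P x /\ Q x).
Proof.
move=> hP hQ; split; first by split; apply: subW0.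
by move=> a x y [? ?] [? ?]; split; apply: subWZD.
Qed.

Lemma sub_sum (U : lmodType k) (P : U -> Prop) n (F : 'I_n -> U) :
  subspace P -> (forall i, P (F i)) -> P (\sum_(i < n) F i).
Proof.
move=> hP hF; elim/big_ind: _ => //; first exact: subW0.
by move=> x y; apply: subWD.
Qed.

Inductive ispan (U : lmodType k) (S : U -> Prop) : U -> Prop :=
| ispan0 : ispan S 0
| ispanS a x y : S x -> ispan S y -> ispan S (a *: x + y).

Lemma ispan_sub (U : lmodType k) (S P : U -> Prop) :
  subspace P -> (forall x, S x -> P x) -> forall x, ispan S x -> P x.
Proof.
move=> hP hS x; elim=> [|a y z Sy _ IH]; first exact: subW0.
by apply: subWZD => //; apply: hS.
Qed.

Lemma ispan_subspace (U : lmodType k) (S : U -> Prop) : subspace (ispan S).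
Proof.
split; first exact: ispan0.
move=> a x y; elim=> [|b u v Su _ IH] hy; first by rewrite scaler0 add0r.
rewrite scalerDr scalerA -addrA; apply: ispanS => //; exact: IH.
Qed.

Lemma ispan_in (U : lmodType k) (S : U -> Prop) x : S x -> ispan S x.
Proof. by move=> Sx; rewrite -[x]addr0 -[x]scale1r; apply: ispanS => //; apply: ispan0. Qed.

Lemma ispan_mono (U : lmodType k) (S S' : U -> Prop) :
  (forall x, S x -> S' x) -> forall x, ispan S x -> ispan S' x.
Proof.
move=> h; apply: ispan_sub; first exact: ispan_subspace.
by move=> x /h; apply: ispan_in.
Qed.

Lemma kspan_ispan (U : lmodType k) (S : U -> Prop) x : kspan S x -> ispan S x.
Proof.
case=> s [c [hs ->]]; apply: sub_sum; first exact: ispan_subspace.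
move=> i; rewrite -[_ *: _]addr0; apply: ispanS; [exact: hs | exact: ispan0].
Qed.

Lemma kspan_in (U : lmodType k) (S : U -> Prop) x : S x -> kspan S x.
Proof.
move=> Sx; exists [:: x], (fun _ => 1); split; first by case=> [[|]].
by rewrite big_ord1 scale1r.
Qed.

Definition spanS (U : lmodType k) (s : seq U) := ispan (fun z => z \in s).

Lemma spanS_sum (U : lmodType k) (s : seq U) (c : 'I_(size s) -> k) :
  spanS s (\sum_(i < size s) c i *: s`_i).
Proof.
apply: sub_sum; first exact: ispan_subspace.
move=> i; rewrite -[_ *: _]addr0; apply: ispanS; last exact: ispan0.
exact: mem_nth.
Qed.

Lemma spanS_coef (U : lmodType k) (s : seq U) y :
  spanS s y -> exists c : 'I_(size s) -> k, y = \sum_(i < size s) c i *: s`_i.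
Proof.
elim=> [|a x z xs _ [c ->]].
  by exists (fun _ => 0); rewrite big1 // => i _; rewrite scale0r.
have hj : (index x s < size s)%N by rewrite index_mem.
pose j : 'I_(size s) := Ordinal hj.
exists (fun i => c i + (if i == j then a else 0)).
rewrite [RHS](eq_bigr (fun i => c i *: s`_i + (if i == j then a else 0) *: s`_i)); last first.
  by move=> i _; rewrite scalerDl.
rewrite big_split /= addrC; congr (_ + _).
rewrite (bigD1 j) //= eqxx big1 ?addr0; last by move=> i /negbTE ->; rewrite scale0r.
by rewrite nth_index.
Qed.

Lemma spanS_nil (U : lmodType k) y : spanS ([::] : seq U) y -> y = 0.
Proof. by elim=> // a x z; rewrite in_nil. Qed.

Lemma spanS_cons (U : lmodType k) (x : U) s y : spanS (x :: s) y ->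
  exists c y0, spanS s y0 /\ y = c *: x + y0.
Proof.
elim=> [|a z w]; first by exists 0, 0; split; [exact: ispan0 | rewrite scale0r addr0].
rewrite in_cons => /orP [/eqP -> | zs] _ [c [y0 [h0 ->]]].
  by exists (a + c), y0; split => //; rewrite scalerDl addrA.
exists c, (a *: z + y0); split; first exact: ispanS.
by rewrite addrCA.
Qed.

Lemma spanS_mono (U : lmodType k) (s s' : seq U) :
  {subset s <= s'} -> forall y, spanS s y -> spanS s' y.
Proof. by move=> h; apply: ispan_mono => x /h. Qed.

Definition fc (U : lmodType k) (P : U -> Prop) :=
  exists s : seq U, forall v, exists y, spanS s y /\ P (v - y).

Lemma fcE (U : lmodType k) (P : U -> Prop) :
  (exists s : seq U, forall v, exists c : 'I_(size s) -> k,
     P (v - \sum_(i < size s) c i *: s`_i)) <-> fc P.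
Proof.
split=> [[s hs]|[s hs]]; exists s => v.
  by have [c hc] := hs v; exists (\sum_(i < size s) c i *: s`_i); split => //; apply: spanS_sum.
by have [y [/spanS_coef [c ->] hy]] := hs v; exists c.
Qed.

Lemma fc_mono (U : lmodType k) (P Q : U -> Prop) :
  (forall x, P x -> Q x) -> fc P -> fc Q.
Proof. by move=> h [s hs]; exists s => v; have [y [? /h ?]] := hs v; exists y. Qed.

Section Pre.
Variables (V W : lmodType k) (f : V -> W) (K : W -> Prop).
Hypotheses (hf : klinear f) (hK : subspace K).

Lemma pre_aux s : forall D, subspace D ->
  (forall v, D v -> exists y, spanS s y /\ K (f v - y)) ->
  exists s' : seq V, (forall z, z \in s' -> D z) /\
    forall v, D v -> exists y, spanS s' y /\ K (f (v - y)).
Proof.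
elim: s => [|x s IH] D hD H.
  exists [::]; split => // v Dv; exists 0; split; first exact: ispan0.
  by have [y [/spanS_nil -> ]] := H v Dv; rewrite !subr0.
case: (pselect (exists v0, D v0 /\ exists y0, spanS s y0 /\ K (f v0 - (x + y0)))).
  move=> [v0 [Dv0 [y0 [sy0 Ky0]]]].
  pose D' := fun v => D v /\ exists y, spanS s y /\ K (f v - y).
  have hD' : subspace D'.
    split; first by split; [exact: subW0 | exists 0; split; [exact: ispan0|rewrite lin0 // subr0; exact: subW0]].
    move=> a u w [Du [yu [su Ku]]] [Dw [yw [sw Kw]]]; split; first exact: subWZD.
    exists (a *: yu + yw); split; first by apply: (subWZD (ispan_subspace _)).
    have -> : f (a *: u + w) - (a *: yu + yw) = a *: (f u - yu) + (f w - yw).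
      by rewrite hf scalerBr opprD addrACA.
    exact: subWZD.
  have [s' [s'D Hs']] := IH D' hD' (fun v h => proj2 h).
  exists (v0 :: s'); split.
    by move=> z; rewrite in_cons => /orP [/eqP -> // | /s'D []].
  move=> v Dv; have [y [/spanS_cons [c [y1 [sy1 ->]]] Ky]] := H v Dv.
  have D'v1 : D' (v - c *: v0).
    split; first by apply: subWB => //; apply: subWZ.
    exists (y1 - c *: y0); split; first by apply: (subWB (ispan_subspace _)) => //; apply: (subWZ (ispan_subspace _)).
    have -> : f (v - c *: v0) - (y1 - c *: y0) = (f v - (c *: x + y1)) - c *: (f v0 - (x + y0)).
      by rewrite linB // linZ // scalerBr scalerDr (zid _ _ _ (c *: x)).
    by apply: subWB => //; apply: subWZ.
  have [y' [sy' Ky']] := Hs' _ D'v1.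
  exists (c *: v0 + y'); split.
    apply: ispanS; first by rewrite in_cons eqxx.
    by apply: spanS_mono sy' => z zs; rewrite in_cons zs orbT.
  by rewrite opprD addrA.
move=> Hno; apply: IH => // v Dv.
have [y [/spanS_cons [c [y1 [sy1 ->]]] Ky]] := H v Dv.
case: (eqVneq c 0) => [c0|c0]; first by exists y1; move: Ky; rewrite c0 scale0r add0r.
exfalso; apply: Hno; exists (c^-1 *: v); split; first exact: subWZ.
exists (c^-1 *: y1); split; first exact: (subWZ (ispan_subspace _)).
have -> : f (c^-1 *: v) - (x + c^-1 *: y1) = c^-1 *: (f v - (c *: x + y1)).
  by rewrite linZ // scalerBr scalerDr scalerA mulVf // scale1r.
exact: subWZ.
Qed.
End Pre.


Lemma fc_pre (V W : lmodType k) (f : V -> W) (K : W -> Prop) :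
  klinear f -> subspace K -> fc K ->
  exists s' : seq V, forall v, exists y, spanS s' y /\ K (f (v - y)).
Proof.
move=> hf hK [s hs].
have [s' [_ H]] := pre_aux hf hK (subspaceT V) (fun v _ => hs (f v)).
by exists s' => v; apply: H.
Qed.

Lemma fc_inter (U : lmodType k) (P Q : U -> Prop) :
  subspace P -> subspace Q -> fc P -> fc Q -> fc (fun x => P x /\ Q x).
Proof.
move=> hP hQ [sP HP] [sQ HQ].
have [s' [s'P H']] := pre_aux (@klinear_id U) hQ hP (fun v _ => HQ v).
exists (sP ++ s') => v.
have [y1 [sy1 Py1]] := HP v.
have [y2 [sy2 Qy2]] := H' _ Py1.
have Py2 : P y2 by apply: (ispan_sub hP) sy2.
exists (y1 + y2); split.
  apply: (subWD (ispan_subspace _)).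
    by apply: spanS_mono sy1 => z zs; rewrite mem_cat zs.
  by apply: spanS_mono sy2 => z zs; rewrite mem_cat zs orbT.
rewrite opprD addrA; split => //; exact: subWB.
Qed.

Lemma fci_inter (U : lmodType k) (m : U -> U -> U) (P Q : U -> Prop) :
  fincodim_ideal m P -> fincodim_ideal m Q -> fincodim_ideal m (fun x => P x /\ Q x).
Proof.
move=> [hP iP fP] [hQ iQ fQ]; split.
- exact: subspaceI.
- by move=> x y [/(iP x) [? ?] /(iQ x) [? ?]].
- by apply/(fcE (fun x => P x /\ Q x)); apply: fc_inter => //; [apply/(fcE P) | apply/(fcE Q)].
Qed.

Section Tens.
Variables (U V T : lmodType k) (t : U -> V -> T).
Hypothesis ht : is_tensor t.

Lemma tlinr u : klinear (t u). Proof. by case: ht => [[]]. Qed.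
Lemma tlinl v : klinear (fun u => t u v). Proof. by case: ht => [[]]. Qed.

Lemma tensor_ext (W : lmodType k) (g1 g2 : T -> W) :
  klinear g1 -> klinear g2 -> (forall u v, g1 (t u v) = g2 (t u v)) ->
  forall x, g1 x = g2 x.
Proof.
move=> h1 h2 he x.
have bil : kbilinear (fun u v => g1 (t u v)).
  split=> [u|v] a y z; rewrite -h1; congr g1; [exact: tlinr | exact: tlinl].
have [g [_ _ uniq]] := ht.2 W _ bil.
by rewrite (uniq g1) // (uniq g2).
Qed.

Lemma tensor_span (P : T -> Prop) : subspace P -> (forall u v, P (t u v)) ->
  forall z, P z.
Proof. by move=> hP; apply: quot_span. Qed.

Definition Wt (I : U -> Prop) (J : V -> Prop) :=
  ispan (fun x => exists u v, (I u \/ J v) /\ x = t u v).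

Lemma Wt_gen (I : U -> Prop) (J : V -> Prop) u v : I u \/ J v -> Wt I J (t u v).
Proof. by move=> h; apply: ispan_in; exists u, v. Qed.

Lemma tsum_Wt (I : U -> Prop) (J : V -> Prop) x : tsum_sub t I J x -> Wt I J x.
Proof. exact: kspan_ispan. Qed.

Lemma Wt_sub (I : U -> Prop) (J : V -> Prop) (P : T -> Prop) : subspace P ->
  (forall u v, I u \/ J v -> P (t u v)) -> forall x, Wt I J x -> P x.
Proof. by move=> hP h; apply: ispan_sub => // x [u [v [huv ->]]]; apply: h. Qed.

Lemma Wt_mono (I I' : U -> Prop) (J J' : V -> Prop) :
  (forall u, I u -> I' u) -> (forall v, J v -> J' v) ->
  forall x, Wt I J x -> Wt I' J' x.
Proof.
move=> hI hJ; apply: Wt_sub; first exact: ispan_subspace.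
by move=> u v [/hI|/hJ] h; apply: Wt_gen; [left|right].
Qed.

Lemma spanS_t (sA : seq U) (sB : seq V) a b : spanS sA a -> spanS sB b ->
  spanS [seq t x y | x <- sA, y <- sB] (t a b).
Proof.
move=> ha hb; move: a ha; apply: ispan_sub.
  exact: (subspace_pre (tlinl b) (ispan_subspace _)).
move=> x xs; move: b hb; apply: ispan_sub.
  exact: (subspace_pre (tlinr x) (ispan_subspace _)).
by move=> y ys; apply: ispan_in; apply: allpairs_f.
Qed.

Lemma Wt_fc (I : U -> Prop) (J : V -> Prop) : subspace I -> subspace J ->
  fc I -> fc J -> fc (Wt I J).
Proof.
move=> hI hJ [sA HA] [sB HB].
exists [seq t x y | x <- sA, y <- sB].
apply: tensor_span.
  split; first by exists 0; split; [exact: ispan0 | rewrite subr0; exact: ispan0].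
  move=> a x y [yx [sx Wx]] [yy [sy Wy]]; exists (a *: yx + yy); split.
    exact: (subWZD (ispan_subspace _)).
  have -> : a *: x + y - (a *: yx + yy) = a *: (x - yx) + (y - yy).
    by rewrite scalerBr opprD addrACA.
  exact: (subWZD (ispan_subspace _)).
move=> a b; have [ya [sya Ia]] := HA a; have [yb [syb Jb]] := HB b.
exists (t ya yb); split; first exact: spanS_t.
have -> : t a b - t ya yb = t (a - ya) b + t ya (b - yb).
  by rewrite (linB (tlinl b)) (linB (tlinr ya)) addrA subrK.
apply: (subWD (ispan_subspace _)); apply: Wt_gen; [left|right] => //.
Qed.

End Tens.

End Gen.


Section Cond.
Variable k : fieldType.

Lemma Wt_os (E F : algType k) (T : lmodType k) (t : E -> F -> T) I J :
  @fincodim_ideal k E *%R I -> @fincodim_ideal k F *%R J ->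
  tensor_os t (cofinite_os (V:=E) *%R) (cofinite_os (V:=F) *%R) (Wt t I J).
Proof.
move=> fI fJ; split; first exact: ispan_subspace.
exists I, J; split.
- by split; [case: fI | exists I].
- by split; [case: fJ | exists J].
- exact: tsum_Wt.
Qed.

Lemma Wt_open (E F : algType k) (T : lmodType k) (t : E -> F -> T) I J :
  @fincodim_ideal k E *%R I -> @fincodim_ideal k F *%R J ->
  lin_open (tensor_os t (cofinite_os (V:=E) *%R) (cofinite_os (V:=F) *%R)) (Wt t I J).
Proof.
move=> fI fJ x hx; exists (Wt t I J); split; first exact: Wt_os.
by move=> w hw; apply: (subWD (ispan_subspace _)).
Qed.

Lemma tos_Wt (E F : algType k) (T : lmodType k) (t : E -> F -> T) W :
  tensor_os t (cofinite_os (V:=E) *%R) (cofinite_os (V:=F) *%R) W ->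
  exists I J, [/\ @fincodim_ideal k E *%R I, @fincodim_ideal k F *%R J &
                  forall x, Wt t I J x -> W x].
Proof.
move=> [hW [E0 [F0 [[_ [I [fI IE]]] [_ [J [fJ JF]]] hs]]]].
exists I, J; split => //; apply: Wt_sub => // u v h; apply: hs; apply: kspan_in.
by exists u, v; split => //; case: h => h; [left; apply: IE | right; apply: JF].
Qed.
End Cond.

Section Main.
Variables (k : fieldType) (A B : algType k) (TAB TBA : lmodType k)
  (tAB : A -> B -> TAB) (tBA : B -> A -> TBA) (tau : TBA -> TAB)
  (mul : TAB -> TAB -> TAB).
Hypotheses (hAB : is_tensor tAB) (hBA : is_tensor tBA)
  (htw : twisting_map tAB tBA tau mul).

Lemma tau_lin : klinear tau. Proof. by case: htw. Qed.
Lemma mul_r p : klinear (mul p). Proof. by case: htw => _ [[H _] _] _ _ _. Qed.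
Lemma mul_l q : klinear (fun p => mul p q). Proof. by case: htw => _ [[_ H] _] _ _ _. Qed.
Lemma twm a b a' b' : exists h, [/\ klinear h,
  forall x y, h (tAB x y) = tAB (a * x) (y * b') &
  mul (tAB a b) (tAB a' b') = h (tau (tBA b a'))].
Proof. by case: htw => _ [_ H] _ _ _; apply: H. Qed.
Lemma mulTA : associative mul. Proof. by case: htw. Qed.
Lemma mulT1l : left_id (tAB 1 1) mul. Proof. by case: htw. Qed.
Lemma mulT1r : right_id (tAB 1 1) mul. Proof. by case: htw. Qed.

Lemma id_of h : klinear h -> (forall x y, h (tAB x y) = tAB x y) -> forall z, h z = z.
Proof. by move=> hh H; apply: (tensor_ext hAB hh (@klinear_id _ _)). Qed.

Lemma tau_1a a : tau (tBA 1 a) = tAB a 1.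
Proof.
have [h [hh hx e]] := twm 1 1 a 1; rewrite mulT1l in e.
by rewrite e id_of // => x y; rewrite hx mul1r mulr1.
Qed.
Lemma tau_b1 b : tau (tBA b 1) = tAB 1 b.
Proof.
have [h [hh hx e]] := twm 1 b 1 1; rewrite mulT1r in e.
by rewrite e id_of // => x y; rewrite hx mul1r mulr1.
Qed.
Lemma tau_mul b a : tau (tBA b a) = mul (tAB 1 b) (tAB a 1).
Proof.
have [h [hh hx e]] := twm 1 b a 1.
by rewrite e id_of // => x y; rewrite hx mul1r mulr1.
Qed.
Lemma mulA1 a a' : mul (tAB a 1) (tAB a' 1) = tAB (a * a') 1.
Proof. by have [h [hh hx ->]] := twm a 1 a' 1; rewrite tau_1a hx mulr1. Qed.
Lemma mulB1 b b' : mul (tAB 1 b) (tAB 1 b') = tAB 1 (b * b').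
Proof. by have [h [hh hx ->]] := twm 1 b 1 b'; rewrite tau_b1 hx mul1r. Qed.
Lemma mulAB a b : mul (tAB a 1) (tAB 1 b) = tAB a b.
Proof. by have [h [hh hx ->]] := twm a 1 1 b; rewrite tau_1a hx mulr1 mul1r. Qed.

Lemma pull_fci K : fincodim_ideal mul K ->
  @fincodim_ideal k A *%R (fun a => K (tAB a 1)) /\
  @fincodim_ideal k B *%R (fun b => K (tAB 1 b)).
Proof.
move=> [hK iK /(fcE K) fK]; split; split.
- exact: (subspace_pre (tlinl hAB 1) hK).
- by move=> x y Ky; rewrite -!mulA1; apply: iK.
- apply/(fcE (fun a => K (tAB a 1))).
  have [s' H] := fc_pre (tlinl hAB 1) hK fK.
  by exists s' => v; have [y [sy Ky]] := H v; exists y.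
- exact: (subspace_pre (tlinr hAB 1) hK).
- by move=> x y Ky; rewrite -!mulB1; apply: iK.
- apply/(fcE (fun b => K (tAB 1 b))).
  have [s' H] := fc_pre (tlinr hAB 1) hK fK.
  by exists s' => v; have [y [sy Ky]] := H v; exists y.
Qed.

Definition Pc := forall I J, @fincodim_ideal k A *%R I -> @fincodim_ideal k B *%R J ->
  exists I1 J1, [/\ @fincodim_ideal k A *%R I1, @fincodim_ideal k B *%R J1 &
     forall a b, I1 a \/ J1 b -> Wt tAB I J (tau (tBA b a))].

Lemma step (Hc : Pc) I J : @fincodim_ideal k A *%R I -> @fincodim_ideal k B *%R J ->
  exists I' J', [/\ @fincodim_ideal k A *%R I', @fincodim_ideal k B *%R J',
    (forall z p, Wt tAB I' J' z -> Wt tAB I J (mul p z)) &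
    (forall z q, Wt tAB I' J' z -> Wt tAB I J (mul z q))].
Proof.
move=> fI fJ; have [I1 [J1 [fI1 fJ1 H1]]] := Hc I J fI fJ.
have [hI iI _] := fI; have [hJ iJ _] := fJ.
have sW : subspace (Wt tAB I J) by apply: ispan_subspace.
exists (fun x => I x /\ I1 x), (fun y => J y /\ J1 y); split.
- exact: fci_inter.
- exact: fci_inter.
- move=> z p hz; move: z hz p; apply: Wt_sub.
    split; first by move=> p; rewrite (lin0 (mul_r p)); apply: subW0.
    by move=> a z z' hz hz' p; rewrite (mul_r p); apply: subWZD.
  move=> x y hxy p; move: p; apply: (tensor_span hAB).
    exact: (subspace_pre (mul_l _) sW).
  move=> a b; have [h [hh hx ->]] := twm a b x y.
  case: hxy => [[Ix I1x] | [Jy J1y]].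
    have := H1 x b (or_introl I1x); move: (tau _).
    apply: Wt_sub; first exact: (subspace_pre hh sW).
    move=> u w huw; rewrite hx; apply: Wt_gen.
    by case: huw => [Iu|Jw]; [left; exact: (iI a u Iu).1 | right; exact: (iJ y w Jw).2].
  apply: (tensor_span hAB (subspace_pre hh sW)) => u w; rewrite hx; apply: Wt_gen.
  by right; exact: (iJ w y Jy).1.
- move=> z q hz; move: z hz q; apply: Wt_sub.
    split; first by move=> q; rewrite (lin0 (mul_l q)); apply: subW0.
    by move=> a z z' hz hz' q; rewrite (mul_l q); apply: subWZD.
  move=> x y hxy q; move: q; apply: (tensor_span hAB).
    exact: (subspace_pre (mul_r _) sW).
  move=> a b; have [h [hh hx ->]] := twm x y a b.
  case: hxy => [[Ix _] | [Jy J1y]].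
    apply: (tensor_span hAB (subspace_pre hh sW)) => u w; rewrite hx; apply: Wt_gen.
    by left; exact: (iI u x Ix).2.
  have := H1 a y (or_intror J1y); move: (tau _).
  apply: Wt_sub; first exact: (subspace_pre hh sW).
  move=> u w huw; rewrite hx; apply: Wt_gen.
  by case: huw => [Iu|Jw]; [left; exact: (iI x u Iu).1 | right; exact: (iJ b w Jw).2].
Qed.

Lemma main_ideal (Hc : Pc) I J : @fincodim_ideal k A *%R I -> @fincodim_ideal k B *%R J ->
  exists K, fincodim_ideal mul K /\ forall z, K z -> Wt tAB I J z.
Proof.
move=> fI fJ.
have [I' [J' [fI' fJ' L1 R1]]] := step Hc fI fJ.
have [I'' [J'' [fI'' fJ'' L2 R2]]] := step Hc fI' fJ'.
have sW : subspace (Wt tAB I J) by apply: ispan_subspace.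
exists (fun z => forall p q, Wt tAB I J (mul (mul p z) q)); split; last first.
  by move=> z Kz; have := Kz (tAB 1 1) (tAB 1 1); rewrite mulT1l mulT1r.
split.
- split; first by move=> p q; rewrite (lin0 (mul_r p)) (lin0 (mul_l q)); apply: subW0.
  by move=> a x y hx hy p q; rewrite (mul_r p) (mul_l q); apply: subWZD.
- move=> x y Ky; split => p q.
    by rewrite (mulTA p x y); apply: Ky.
  by rewrite (mulTA p y x) -(mulTA (mul p y) x q); apply: Ky.
- apply/(fcE (fun z => forall p q, Wt tAB I J (mul (mul p z) q))).
  have [hI'' _ /(fcE I'') fcI''] := fI''.
  have [hJ'' _ /(fcE J'') fcJ''] := fJ''.
  apply: fc_mono (Wt_fc hAB hI'' hJ'' fcI'' fcJ'').
  by move=> z hz p q; apply: R1; apply: L2.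
Qed.

Let osA := cofinite_os (V := A) *%R.
Let osB := cofinite_os (V := B) *%R.

Lemma iia : lin_continuous (tensor_os tAB osA osB) (cofinite_os mul) id.
Proof.
move=> U hU x Ux; have [W [[hW [K [fK KW]]] HW]] := hU x Ux.
exists W; split => //; split => //.
have [fIA fJB] := pull_fci fK.
have [hK iK _] := fK.
exists (fun a => K (tAB a 1)), (fun b => K (tAB 1 b)); split.
- by split; [case: fIA | exists (fun a => K (tAB a 1))].
- by split; [case: fJB | exists (fun b => K (tAB 1 b))].
- move=> z /tsum_Wt hz; apply: KW; move: z hz; apply: Wt_sub => // u v.
  case=> h; rewrite -mulAB; [exact: (iK (tAB 1 v) _ h).2 | exact: (iK (tAB u 1) _ h).1].
Qed.

Lemma cont_of (Hc : Pc) : lin_continuous (tensor_os tBA osB osA) (tensor_os tAB osA osB) tau.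
Proof.
move=> U hU x Ux; have [W [osW HW]] := hU _ Ux.
have [I [J [fI fJ WW]]] := tos_Wt osW.
have [I1 [J1 [fI1 fJ1 H1]]] := Hc I J fI fJ.
exists (Wt tBA J1 I1); split; first exact: Wt_os.
move=> w hw; rewrite (linD tau_lin); apply: HW; apply: WW; move: w hw.
apply: Wt_sub; first exact: (subspace_pre tau_lin (ispan_subspace _)).
by move=> u v h; apply: H1; case: h; [right|left].
Qed.

Lemma Pc_of_i : lin_continuous (tensor_os tBA osB osA) (tensor_os tAB osA osB) tau -> Pc.
Proof.
move=> Hi I J fI fJ.
have t0 : Wt tAB I J (tau 0) by rewrite (lin0 tau_lin); apply: ispan0.
have [W1 [osW1 H]] := Hi _ (Wt_open (t:=tAB) fI fJ) 0 t0.
have [J1 [I1 [fJ1 fI1 WW]]] := tos_Wt osW1.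
exists I1, J1; split => // a b h.
have := H (tBA b a); rewrite add0r; apply; apply: WW; apply: Wt_gen.
by case: h; [right|left].
Qed.

Lemma Pc_of_ii : lin_continuous (cofinite_os mul) (tensor_os tAB osA osB) id -> Pc.
Proof.
move=> Hii I J fI fJ.
have [W' [[hW' [K [fK KW]]] H]] := Hii _ (Wt_open (t:=tAB) fI fJ) 0 (ispan0 _).
have [fIA fJB] := pull_fci fK.
have [hK iK _] := fK.
exists (fun a => K (tAB a 1)), (fun b => K (tAB 1 b)); split => // a b h.
have := H (tau (tBA b a)); rewrite add0r; apply; apply: KW; rewrite tau_mul.
by case: h => h; [exact: (iK (tAB 1 b) _ h).1 | exact: (iK (tAB a 1) _ h).2].
Qed.

Lemma iib_of (Hc : Pc) : lin_continuous (cofinite_os mul) (tensor_os tAB osA osB) id.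
Proof.
move=> U hU x Ux; have [W [osW HW]] := hU x Ux.
have [I [J [fI fJ WW]]] := tos_Wt osW.
have [K [fK KW]] := main_ideal Hc fI fJ.
exists W; split => //; split; first by case: osW.
by exists K; split => // z /KW; apply: WW.
Qed.

Lemma Pc_of_iii :
  (exists (famA : (A -> Prop) -> Prop) (famB : (B -> Prop) -> Prop),
      [/\ nbhd_basis_F *%R famA, nbhd_basis_F *%R famB,
          (forall I, famA I -> forall x, tright_sub tBA I x -> tleft_sub tAB I (tau x)) &
          (forall J, famB J -> forall x, tleft_sub tBA J x -> tright_sub tAB J (tau x))]) -> Pc.
Proof.
move=> [famA [famB [[nA1 nA2] [nB1 nB2] HA HB]]] I J fI fJ.
have [I1 [fa1 I1I]] := nA2 I fI.
have [J1 [fb1 J1J]] := nB2 J fJ.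
exists I1, J1; split; [exact: nA1 | exact: nB1 |].
move=> a b [I1a|J1b].
  have := HA I1 fa1 (tBA b a) (kspan_in (ex_intro _ b (ex_intro _ a (conj I1a erefl)))).
  move/kspan_ispan; apply: ispan_sub; first exact: ispan_subspace.
  by move=> x [u [v [hu ->]]]; apply: Wt_gen; left; apply: I1I.
have := HB J1 fb1 (tBA b a) (kspan_in (ex_intro _ b (ex_intro _ a (conj J1b erefl)))).
move/kspan_ispan; apply: ispan_sub; first exact: ispan_subspace.
by move=> x [u [v [hv ->]]]; apply: Wt_gen; right; apply: J1J.
Qed.

End Main.

Theorem proposition3p4 (k : fieldType) (A B : algType k) (TAB TBA : lmodType k)
  (tAB : A -> B -> TAB) (tBA : B -> A -> TBA)
  (tau : TBA -> TAB) (mul : TAB -> TAB -> TAB) :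
  is_tensor tAB -> is_tensor tBA ->
  twisting_map tAB tBA tau mul ->
  let osA := cofinite_os (V := A) *%R in
  let osB := cofinite_os (V := B) *%R in
  let cond_i := lin_continuous (tensor_os tBA osB osA) (tensor_os tAB osA osB) tau in
  let cond_ii := lin_continuous (tensor_os tAB osA osB) (cofinite_os mul) id /\
                 lin_continuous (cofinite_os mul) (tensor_os tAB osA osB) id in
  let cond_iii :=
    exists (famA : (A -> Prop) -> Prop) (famB : (B -> Prop) -> Prop),
      [/\ nbhd_basis_F *%R famA, nbhd_basis_F *%R famB,
          (forall I, famA I -> forall x, tright_sub tBA I x -> tleft_sub tAB I (tau x)) &
          (forall J, famB J -> forall x, tleft_sub tBA J x -> tright_sub tAB J (tau x))] in
  (cond_i <-> cond_ii) /\ (cond_iii -> cond_i).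
Proof.
move=> hAB hBA htw osA osB cond_i cond_ii cond_iii.
split; first split.
- move=> Hi; split; first exact: (iia hAB htw).
  exact: (iib_of hAB htw (Pc_of_i htw Hi)).
- move=> [_ Hii]; apply: (cont_of htw); exact: (Pc_of_ii hAB htw Hii).
- move=> Hiii; apply: (cont_of htw); exact: (Pc_of_iii Hiii).
Qed.
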